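(* Let $H$ be an almost-breakable monoid. If $H$ is twisted or bridged, then $\mathcal{P}_{\mathrm{fin},1}(H)$ is not UmF.
   Context: A monoid $H$ is almost-breakable if for all $x,y\in H$, $xy\in\{x,y\}$ or $yx\in\{x,y\}$. An ordered pair $(x,y)\in H\times H$ is balanced if $xy\in\{x,y\}$, unbalanced otherwise. $H$ is twisted if there exist unbalanced pairs $(x,y)$ and $(z,w)$ with $\{x,y\}\cap\{z,w\}=\emptyset$, $xy\in\{z,w\}$ and $zw\in\{x,y\}$. $H$ is bridged if there exist $x_1,x_2,x_3\in H$ such that $(x_1,x_2)$, $(x_2,x_3)$, $(x_1,x_3)$ are unbalanced pairs and $x_1x_3\notin\{x_1x_2,x_2x_3\}$. $\mathcal{P}_{\mathrm{fin},1}(H)$ denotes the set of non-empty finite subsets of $H$ containing $1_H$, a monoid under $XY=\{xy:x\in X,y\in Y\}$. In a monoid $M$: $x\mid_M y$ iff $y\in MxM$; $x,y$ are associated if each divides the other; proper divisor means divides but not associated. A unit-divisor divides $1_M$; otherwise it is a non-unit-divisor. An irreducible is a non-unit-divisor $a$ with $a\neq xy$ for all non-unit-divisors $x,y$ properly dividing $a$. A factorization of $x$ is a finite word over the irreducibles with product $x$. For words $\mathfrak a,\mathfrak b$, $\mathfrak a\sqsubseteq\mathfrak b$ means $\mathfrak a$ is, up to associatedness of letters, a subword (subsequence) of some permutation of $\mathfrak b$; equivalence means $\sqsubseteq$ both ways. A factorization $\mathfrak a$ of $x$ is minimal if no factorization $\mathfrak b$ of $x$ satisfies $\mathfrak b\sqsubseteq\mathfrak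 a\not\sqsubseteq\mathfrak b$. $M$ is UmF if every non-unit-divisor has a factorization and any two minimal factorizations of an element are equivalent. *)

(* Defs.v *)
From Stdlib Require Import List Permutation.
Import ListNotations.
Set Implicit Arguments.

Record Monoid := {
  mcar :> Type;
  mmul : mcar -> mcar -> mcar;
  mone : mcar;
  massoc : forall x y z, mmul x (mmul y z) = mmul (mmul x y) z;
  mone_l : forall x, mmul mone x = x;
  mone_r : forall x, mmul x mone = x }.

Section HNotions.
Variable H : Monoid.
Local Notation "x * y" := (mmul H x y).

Definition balanced (x y : H) : Prop := x * y = x \/ x * y = y.
Definition unbalanced (x y : H) : Prop := ~ balanced x y.

Definition almost_breakable : Prop :=
  forall x y : H, balanced x y \/ balanced y x.

Definition twisted : Prop :=
  exists x y z w : H,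
    unbalanced x y /\ unbalanced z w /\
    (x <> z /\ x <> w /\ y <> z /\ y <> w) /\
    (x * y = z \/ x * y = w) /\ (z * w = x \/ z * w = y).

Definition bridged : Prop :=
  exists x1 x2 x3 : H,
    unbalanced x1 x2 /\ unbalanced x2 x3 /\ unbalanced x1 x3 /\
    x1 * x3 <> x1 * x2 /\ x1 * x3 <> x2 * x3.

Definition finite_subset (X : H -> Prop) : Prop :=
  exists s : list H, forall x, X x <-> In x s.

Definition Pfin1 : Type :=
  { X : H -> Prop | finite_subset X /\ X (mone H) }.

Definition set_mul (X Y : H -> Prop) : H -> Prop :=
  fun z => exists x y, X x /\ Y y /\ z = x * y.

Lemma set_mul_finite X Y : finite_subset X -> finite_subset Y ->
  finite_subset (set_mul X Y).
Proof.
  intros [s Hs] [t Ht].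
  exists (flat_map (fun x => map (fun y => x * y) t) s).
  intro z; rewrite in_flat_map; split.
  - intros (x & y & Hx & Hy & ->). exists x; split; [now apply Hs|].
    apply in_map_iff; exists y; split; [reflexivity| now apply Ht].
  - intros (x & Hx & Hz). apply in_map_iff in Hz as (y & <- & Hy).
    exists x, y; repeat split; [now apply Hs | now apply Ht].
Qed.

Lemma set_mul_one X Y : X (mone H) -> Y (mone H) -> set_mul X Y (mone H).
Proof. intros HX HY; exists (mone H), (mone H); repeat split; auto.
  now rewrite mone_l. Qed.

Definition Pfin1_mul (X Y : Pfin1) : Pfin1 :=
  exist _ (set_mul (proj1_sig X) (proj1_sig Y))
    (conj (@set_mul_finite _ _ (proj1 (proj2_sig X)) (proj1 (proj2_sig Y)))
          (@set_mul_one _ _ (proj2 (proj2_sig X)) (proj2 (proj2_sig Y)))).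

Definition Pfin1_one : Pfin1.
Proof.
  exists (fun x => x = mone H). split.
  - exists [mone H]. intro x; simpl; split; [intros ->; now left | now intros [->|[]]].
  - reflexivity.
Defined.

End HNotions.

Section Fact.
Variables (M : Type) (mul : M -> M -> M) (one : M).

Definition mdivides (x y : M) : Prop := exists a b, y = mul (mul a x) b.
Definition massociated (x y : M) : Prop := mdivides x y /\ mdivides y x.
Definition proper_divisor (x y : M) : Prop := mdivides x y /\ ~ mdivides y x.
Definition unit_divisor (x : M) : Prop := mdivides x one.

Definition irreducible (a : M) : Prop :=
  ~ unit_divisor a /\
  forall x y, ~ unit_divisor x -> ~ unit_divisor y ->
    proper_divisor x a -> proper_divisor y a -> a <> mul x y.

Definition word_prod (w : list M) : M := fold_right mul one w.

Definition factorization (w : list M) (x : M) : Prop :=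
  Forall irreducible w /\ word_prod w = x.

Inductive sublist {A : Type} : list A -> list A -> Prop :=
| sl_nil : sublist [] []
| sl_keep x l1 l2 : sublist l1 l2 -> sublist (x :: l1) (x :: l2)
| sl_skip x l1 l2 : sublist l1 l2 -> sublist l1 (x :: l2).

Definition subword (a b : list M) : Prop :=
  exists p s, Permutation b p /\ sublist s p /\ Forall2 massociated a s.

Definition word_equiv (a b : list M) : Prop := subword a b /\ subword b a.

Definition minimal_factorization (a : list M) (x : M) : Prop :=
  factorization a x /\
  ~ (exists b, factorization b x /\ subword b a /\ ~ subword a b).

Definition UmF : Prop :=
  (forall x, ~ unit_divisor x -> exists a, factorization a x) /\
  (forall x a b, minimal_factorization a x -> minimal_factorization b x ->
     word_equiv a b).

End Fact.

(* Main.v *)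
Require Import Defs.
From Stdlib Require Import List Permutation Arith Lia.
From Stdlib Require Import Classical FunctionalExtensionality PropExtensionality ProofIrrelevance.
Import ListNotations.
Set Implicit Arguments.


Section SLists.
Context {A : Type}.

Lemma sublist_length (s l : list A) : sublist s l -> length s <= length l.
Proof. induction 1; simpl; lia. Qed.

Lemma sublist_eq_length (s l : list A) : sublist s l -> length s = length l -> s = l.
Proof.
  induction 1; simpl; intros E; auto.
  - f_equal; auto.
  - apply sublist_length in H. lia.
Qed.

Lemma sublist_refl (l : list A) : sublist l l.
Proof. induction l; constructor; auto. Qed.

Lemma sublist_nil (l : list A) : sublist [] l.
Proof. induction l; constructor; auto. Qed.

Lemma sublist_trans (a b c : list A) : sublist a b -> sublist b c -> sublist a c.
Proof.
  intros H1 H2. revert a H1. induction H2; intros a H1.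
  - exact H1.
  - inversion H1; subst.
    + constructor; auto.
    + apply sl_skip; auto.
  - apply sl_skip; auto.
Qed.

Lemma sublist_incl (s l : list A) : sublist s l -> incl s l.
Proof.
  induction 1; intros z Hz; simpl in *; auto.
  destruct Hz; auto.
Qed.

Lemma sublist_perm (s l l' : list A) : sublist s l -> Permutation l l' ->
  exists s', sublist s' l' /\ Permutation s s'.
Proof.
  intros Hs Hp. revert s Hs. induction Hp; intros s Hs.
  - exists s; split; auto.
  - inversion Hs as [|? s0 ? Hs0|? ? ? Hs0]; subst.
    + destruct (IHHp _ Hs0) as (s' & H1' & H2'). exists (x :: s'); split.
      * constructor; auto.
      * constructor; auto.
    + destruct (IHHp _ Hs0) as (s' & H1' & H2'). exists s'; split; auto.
      apply sl_skip; auto.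
  - inversion Hs as [|? s0 ? Hs0|? ? ? Hs0]; subst.
    + inversion Hs0 as [|? s1 ? Hs1|? ? ? Hs1]; subst.
      * exists (x :: y :: s1); split. do 2 constructor; auto. apply perm_swap.
      * exists (y :: s0); split. apply sl_skip; constructor; auto. auto.
    + inversion Hs0 as [|? s1 ? Hs1|? ? ? Hs1]; subst.
      * exists (x :: s1); split. constructor; apply sl_skip; auto. auto.
      * exists s; split. do 2 apply sl_skip; auto. auto.
  - destruct (IHHp1 _ Hs) as (s1 & A1 & B1).
    destruct (IHHp2 _ A1) as (s2 & A2 & B2).
    exists s2; split; auto. eapply perm_trans; eauto.
Qed.

Lemma sublist_compl (s l : list A) : sublist s l -> exists r, Permutation l (s ++ r).
Proof.
  induction 1.
  - exists []; auto.
  - destruct IHsublist as [r Hr]. exists r. simpl. constructor; auto.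
  - destruct IHsublist as [r Hr]. exists (x :: r).
    eapply perm_trans. constructor. exact Hr. apply Permutation_middle.
Qed.

Definition sw (a b : list A) := exists s, sublist s b /\ Permutation a s.

Lemma sw_trans a b c : sw a b -> sw b c -> sw a c.
Proof.
  intros (s & H1 & H2) (t & H3 & H4).
  destruct (sublist_perm H1 H4) as (s' & H5 & H6).
  exists s'; split. eapply sublist_trans; eauto. eapply perm_trans; eauto.
Qed.

Lemma sw_refl a : sw a a.
Proof. exists a; split; auto using sublist_refl. Qed.

Lemma sw_length a b : sw a b -> length a <= length b.
Proof.
  intros (s & H1 & H2). apply Permutation_length in H2. apply sublist_length in H1. lia.
Qed.

Lemma sw_eq_length a b : sw a b -> length a = length b -> Permutation a b.
Proof.
  intros (s & H1 & H2) E. pose proof (Permutation_length H2).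
  assert (s = b) by (apply sublist_eq_length; auto; lia). subst; auto.
Qed.

Lemma sw_incl a b : sw a b -> incl a b.
Proof.
  intros (s & H1 & H2) z Hz. apply (sublist_incl H1). eapply Permutation_in; eauto.
Qed.

Lemma perm3 (l : list A) x y z : Permutation [x;y;z] l ->
  l = [x;y;z] \/ l = [x;z;y] \/ l = [y;x;z] \/ l = [y;z;x] \/ l = [z;x;y] \/ l = [z;y;x].
Proof.
  intros Hp.
  assert (length l = 3) by (apply Permutation_length in Hp; simpl in Hp; lia).
  destruct l as [|u1 [|u2 [|u3 [|]]]]; simpl in H; try lia.
  pose proof (Permutation_in _ Hp (or_introl eq_refl)) as Hx.
  apply Permutation_sym in Hp.
  simpl in Hx. destruct Hx as [->|[->|[->|[]]]].
  - apply Permutation_cons_inv in Hp.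
    apply Permutation_length_2_inv in Hp. destruct Hp as [E|E]; inversion E; subst; auto 10.
  - change [u1; x; u3] with ([u1] ++ x :: [u3]) in Hp.
    apply Permutation_sym, Permutation_cons_app_inv in Hp. simpl in Hp.
    apply Permutation_sym, Permutation_length_2_inv in Hp. destruct Hp as [E|E]; inversion E; subst; auto 10.
  - change [u1; u2; x] with ([u1;u2] ++ x :: []) in Hp.
    apply Permutation_sym, Permutation_cons_app_inv in Hp. simpl in Hp.
    apply Permutation_sym, Permutation_length_2_inv in Hp. destruct Hp as [E|E]; inversion E; subst; auto 10.
Qed.

End SLists.


Section SP.
Variable H : Monoid.
Local Notation "x * y" := (mmul H x y).
Local Notation one := (mone H).
Local Notation P := (Pfin1 H).
Local Notation pm := (@Pfin1_mul H).
Local Notation pone := (Pfin1_one H).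

Definition car (X : P) : H -> Prop := proj1_sig X.

Lemma Pfin1_ext (X Y : P) : (forall z, car X z <-> car Y z) -> X = Y.
Proof.
  destruct X as [x hx], Y as [y hy]; unfold car; simpl; intros E.
  assert (x = y) by (apply functional_extensionality; intro z; apply propositional_extensionality; auto).
  subst. f_equal. apply proof_irrelevance.
Qed.

Lemma car_mul X Y z : car (pm X Y) z <-> exists x y, car X x /\ car Y y /\ z = x * y.
Proof. reflexivity. Qed.

Lemma car_one z : car pone z <-> z = one.
Proof. reflexivity. Qed.

Lemma car_1 X : car X one.
Proof. exact (proj2 (proj2_sig X)). Qed.

Lemma pm_one_l X : pm pone X = X.
Proof.
  apply Pfin1_ext; intro z; rewrite car_mul; split.
  - intros (x & y & Hx & Hy & ->). rewrite car_one in Hx; subst. rewrite mone_l; auto.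
  - intros Hz. exists one, z. repeat split; auto. rewrite mone_l; auto.
Qed.

Lemma pm_one_r X : pm X pone = X.
Proof.
  apply Pfin1_ext; intro z; rewrite car_mul; split.
  - intros (x & y & Hx & Hy & ->). rewrite car_one in Hy; subst. rewrite mone_r; auto.
  - intros Hz. exists z, one. repeat split; auto. rewrite mone_r; auto.
Qed.

Lemma div_car X Y : mdivides pm X Y -> forall z, car X z -> car Y z.
Proof.
  intros (A & B & ->) z Hz. rewrite car_mul. exists z, one. split; [|split].
  - rewrite car_mul. exists one, z. repeat split; auto using car_1. rewrite mone_l; auto.
  - apply car_1.
  - rewrite mone_r; auto.
Qed.

Lemma div_refl X : mdivides pm X X.
Proof. exists pone, pone. rewrite pm_one_l, pm_one_r; auto. Qed.

Lemma assoc_eq X Y : massociated pm X Y -> X = Y.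
Proof.
  intros [H1 H2]. apply Pfin1_ext; intro z; split; apply div_car; auto.
Qed.

Lemma assoc_refl X : massociated pm X X.
Proof. split; apply div_refl. Qed.

Lemma f2_eq a s : Forall2 (massociated pm) a s -> a = s.
Proof. induction 1; auto. f_equal; auto using assoc_eq. Qed.

Lemma subword_sw a b : subword pm a b -> sw a b.
Proof.
  intros (p & s & Hp & Hs & Hf).
  apply f2_eq in Hf. subst.
  destruct (sublist_perm Hs (Permutation_sym Hp)) as (s' & H1 & H2).
  exists s'; auto.
Qed.

Lemma sw_subword a b : sw a b -> subword pm a b.
Proof.
  intros (s & H1 & H2).
  destruct (sublist_compl H1) as [r Hr].
  exists (a ++ r), a. split; [|split].
  - eapply perm_trans; [exact Hr|]. apply Permutation_app_tail. apply Permutation_sym; auto.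
  - clear. induction a; simpl. apply sublist_nil. constructor; auto.
  - clear. induction a; constructor; auto using assoc_refl.
Qed.

Definition sing1 (u : H) : P.
Proof.
  exists (fun z => z = one \/ z = u). split.
  - exists [one; u]. intro x; simpl; split.
    + intros [->| ->]; auto.
    + intros [<-|[<-|[]]]; auto.
  - left; reflexivity.
Defined.

Lemma car_sing1 u z : car (sing1 u) z <-> z = one \/ z = u.
Proof. reflexivity. Qed.

Fixpoint subprods (us : list H) : list H :=
  match us with
  | [] => [one]
  | u :: us' => subprods us' ++ map (fun y => u * y) (subprods us')
  end.

Lemma car_word us z : car (word_prod pm pone (map sing1 us)) z <-> In z (subprods us).
Proof.
  revert z; induction us as [|u us IH]; intro z.
  - change (car pone z <-> In z [one]). rewrite car_one. simpl. split; [intros ->; auto | intros [<-|[]]; auto].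
  - change (car (pm (sing1 u) (word_prod pm pone (map sing1 us))) z <->
            In z (subprods us ++ map (fun y => u * y) (subprods us))).
    rewrite car_mul, in_app_iff, in_map_iff. split.
    + intros (x & y & Hx & Hy & ->). rewrite IH in Hy. destruct Hx as [-> | ->].
      * left. rewrite mone_l; auto.
      * right. exists y; auto.
    + intros [Hz | (y & <- & Hy)].
      * exists one, z. repeat split; auto. left; auto. apply IH; auto. rewrite mone_l; auto.
      * exists u, y. repeat split; auto. right; auto. apply IH; auto.
Qed.

Lemma subprods_length us : length (subprods us) = 2 ^ length us.
Proof. induction us; simpl; auto. rewrite length_app, length_map, IHus. lia. Qed.

Lemma subprods_closed (K : H -> Prop) us : K one -> (forall x y, K x -> K y -> K (x * y)) ->
  Forall K us -> forall z, In z (subprods us) -> K z.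
Proof.
  intros K1 KM Hus. induction Hus; simpl; intros z Hz.
  - destruct Hz as [<-|[]]; auto.
  - apply in_app_iff in Hz. destruct Hz as [Hz|Hz]; auto.
    apply in_map_iff in Hz. destruct Hz as (y & <- & Hy). auto.
Qed.

Lemma irr_sing1 u : u <> one -> irreducible pm pone (sing1 u).
Proof.
  intros Hu. split.
  - intros Hd. apply Hu. apply (div_car Hd). right; auto.
  - intros Y Z HY HZ [HYd HYn] _ E.
    destruct (classic (car Y u)) as [Yu|Yu].
    + apply HYn. replace Y with (sing1 u). apply div_refl.
      apply Pfin1_ext; intro z; split.
      * intros [->| ->]; auto using car_1.
      * intros Hz. apply (div_car HYd) in Hz. auto.
    + apply HY. replace Y with pone. apply div_refl.
      apply Pfin1_ext; intro z; rewrite car_one; split.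
      * intros ->; apply car_1.
      * intros Hz. pose proof (div_car HYd _ Hz) as [?|?]; subst; tauto.
Qed.

Lemma sing1_inj u v : u <> one -> sing1 u = sing1 v -> u = v.
Proof.
  intros Hu E. assert (car (sing1 v) u) by (rewrite <- E; right; auto).
  destruct H0; tauto.
Qed.

Lemma fact_sing us X : Forall (fun u => u <> one) us -> word_prod pm pone (map sing1 us) = X ->
  factorization pm pone (map sing1 us) X.
Proof.
  intros Hf E; split; auto. clear E. induction Hf; simpl; constructor; auto. apply irr_sing1; auto.
Qed.

Lemma exists_min n : forall w X, length w <= n -> factorization pm pone w X ->
  exists m, minimal_factorization pm pone m X /\ sw m w.
Proof.
  induction n; intros w X Hl Hf.
  - destruct w; simpl in Hl; try lia.
    exists []; split; [|apply sw_refl]. split; auto.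
    intros (b & Hb & Hs & Hn). apply Hn. apply subword_sw in Hs.
    apply sw_length in Hs. destruct b; simpl in Hs; try lia. apply sw_subword, sw_refl.
  - destruct (classic (minimal_factorization pm pone w X)) as [Hm|Hm].
    + exists w; split; auto using sw_refl.
    + assert (exists b, factorization pm pone b X /\ subword pm b w /\ ~ subword pm w b) as (b & Hb & Hs & Hn).
      { apply NNPP; intro C; apply Hm; split; auto. }
      apply subword_sw in Hs.
      assert (length b < length w).
      { pose proof (sw_length Hs). destruct (Nat.eq_dec (length b) (length w)); try lia.
        exfalso. apply Hn, sw_subword. apply sw_eq_length in Hs; auto.
        exists b; split; auto using sublist_refl. apply Permutation_sym; auto. }
      destruct (IHn b X ltac:(lia) Hb) as (m & Hm1 & Hm2).
      exists m; split; auto. eapply sw_trans; eauto.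
Qed.

Lemma key w1 w2 X : UmF pm pone -> minimal_factorization pm pone w1 X ->
  factorization pm pone w2 X -> sw w1 w2.
Proof.
  intros [_ U] H1 H2.
  destruct (@exists_min (length w2) w2 X (le_n _) H2) as (m & Hm & Hs).
  destruct (U X w1 m H1 Hm) as [E _].
  eapply sw_trans; [apply subword_sw; exact E | exact Hs].
Qed.

End SP.


Ltac norm1 :=
  first [ match goal with Hf : mmul _ ?u ?v = ?s |- context[mmul _ ?u ?v] => rewrite Hf end
        | match goal with Hf : mmul _ ?v ?t = ?s |- context[mmul _ (mmul _ ?u ?v) ?t] =>
              rewrite <- (massoc _ u v t), Hf end ].
Ltac norm := rewrite ?mone_l, ?mone_r, ?massoc; repeat (norm1; rewrite ?mone_l, ?mone_r, ?massoc).

Ltac inl := simpl; repeat (first [ now left | right ]).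

Ltac eqlist := intros e He; simpl in He; repeat destruct He as [<-|He]; try contradiction; simpl; norm; inl.

Section SC.
Variable H : Monoid.
Local Notation "x * y" := (mmul H x y).
Local Notation one := (mone H).
Local Notation P := (Pfin1 H).
Local Notation pm := (@Pfin1_mul H).
Local Notation pone := (Pfin1_one H).
Variable AB : almost_breakable H.

Lemma idem x : x * x = x.
Proof. destruct (AB x x) as [[E|E]|[E|E]]; auto. Qed.

Lemma unb_ne x y : unbalanced H x y -> x <> one /\ y <> one /\ x <> y.
Proof.
  intros U. split; [|split]; intros ->; apply U.
  - right; apply mone_l.
  - left; apply mone_r.
  - left; apply idem.
Qed.

Lemma unb_sym x y : unbalanced H x y -> y * x = y \/ y * x = x.
Proof. intros U. destruct (AB x y) as [B|B]; [contradiction|exact B]. Qed.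

Lemma no_one x y : x <> one -> y <> one -> x * y <> one.
Proof.
  intros Hx Hy E. destruct (AB x y) as [[B|B]|[B|B]].
  - congruence.
  - congruence.
  - apply Hx. rewrite <- (mone_r H x), <- E, massoc, idem; auto.
  - apply Hy. rewrite <- (mone_l H y), <- E, <- massoc, idem; auto.
Qed.

Lemma incl_map_sing (d : list P) us : incl d (map (@sing1 H) us) ->
  exists vs, d = map (@sing1 H) vs /\ incl vs us.
Proof.
  induction d as [|U d IH]; intros Hi.
  - exists []; split; auto. intros ? [].
  - destruct (IH (proj2 (incl_cons_inv Hi))) as (vs & -> & Hv).
    destruct (proj1 (in_map_iff _ _ _) (proj1 (incl_cons_inv Hi))) as (v & <- & Hv').
    exists (v :: vs); split; auto. intros z [<-|Hz]; auto.
Qed.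

Lemma conclude w1 w2 X : minimal_factorization pm pone w1 X -> factorization pm pone w2 X ->
  ~ sw w1 w2 -> ~ UmF pm pone.
Proof. intros H1 H2 Hn U. apply Hn. eapply key; eauto. Qed.

Lemma word_eq us1 us2 T : (forall e, In e (subprods H us1) -> In e T) -> (forall e, In e T -> In e (subprods H us1)) ->
  (forall e, In e (subprods H us2) -> In e T) -> (forall e, In e T -> In e (subprods H us2)) ->
  word_prod pm pone (map (@sing1 H) us2) = word_prod pm pone (map (@sing1 H) us1).
Proof.
  intros. apply Pfin1_ext; intro z. rewrite !car_word. split; auto.
Qed.

Lemma not_sw us1 us2 u : In u us1 -> ~ In u us2 -> u <> one ->
  ~ sw (map (@sing1 H) us1) (map (@sing1 H) us2).
Proof.
  intros H1 H2 Hu Hs. apply sw_incl in Hs.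
  assert (In (sing1 H u) (map (@sing1 H) us2)) as Hi by (apply Hs, in_map; auto).
  apply in_map_iff in Hi as (v & E & Hv). symmetry in E. apply sing1_inj in E; auto. subst; auto.
Qed.

Lemma min_size us T : Forall (fun u => u <> one) us -> length us = 3 -> NoDup T -> length T = 5 ->
  (forall e, In e T -> In e (subprods H us)) ->
  minimal_factorization pm pone (map (@sing1 H) us) (word_prod pm pone (map (@sing1 H) us)).
Proof.
  intros Hne Hl HT HT5 Hinc. split; [apply fact_sing; auto|].
  intros (b & [_ Hb] & Hs & Hn). apply subword_sw in Hs.
  assert (length b < 3).
  { pose proof (sw_length Hs). rewrite length_map in H0.
    destruct (Nat.eq_dec (length b) 3); try lia. exfalso. apply Hn, sw_subword.
    apply sw_eq_length in Hs; [|rewrite length_map; lia].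
    exists b; split; auto using sublist_refl. apply Permutation_sym; auto. }
  destruct (incl_map_sing _ (sw_incl Hs)) as (vs & -> & _).
  rewrite length_map in H0.
  assert (incl T (subprods H vs)).
  { intros e He. apply (proj1 (car_word H vs e)). rewrite Hb. apply car_word. auto. }
  apply NoDup_incl_length in H1; auto. rewrite subprods_length in H1.
  destruct vs as [|? [|? [|]]]; simpl in *; lia.
Qed.

End SC.


Section SD.
Variable H : Monoid.
Local Notation "x * y" := (mmul H x y).
Local Notation one := (mone H).
Local Notation P := (Pfin1 H).
Local Notation pm := (@Pfin1_mul H).
Local Notation pone := (Pfin1_one H).
Variable AB : almost_breakable H.

Lemma twist_finish us1 us2 T u : Forall (fun u => u <> one) us1 -> Forall (fun u => u <> one) us2 ->
  length us1 = 3 -> NoDup T -> length T = 5 ->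
  (forall e, In e (subprods H us1) -> In e T) -> (forall e, In e T -> In e (subprods H us1)) ->
  (forall e, In e (subprods H us2) -> In e T) -> (forall e, In e T -> In e (subprods H us2)) ->
  In u us1 -> ~ In u us2 -> u <> one -> ~ UmF pm pone.
Proof.
  intros F1 F2 L ND L5 I1 I2 I3 I4 U1 U2 U3.
  apply (@conclude H (map (@sing1 H) us1) (map (@sing1 H) us2) (word_prod pm pone (map (@sing1 H) us1))).
  - apply (@min_size H us1 T); auto.
  - apply fact_sing; auto. apply (@word_eq H us1 us2 T); auto.
  - apply (@not_sw H us1 us2 u); auto.
Qed.

Ltac tfin us1 us2 T u :=
  apply (@twist_finish us1 us2 T u);
  [ repeat constructor; auto | repeat constructor; auto | reflexivity
  | repeat constructor; simpl; intuition congruence | reflexivity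
  | eqlist | eqlist | eqlist | eqlist
  | simpl; auto | simpl; intuition congruence | auto ].

Lemma twisted_case : twisted H -> ~ UmF pm pone.
Proof.
  intros (x & y & z & w & Uxy & Uzw & (n1 & n2 & n3 & n4) & Exy & Ezw).
  destruct (unb_ne AB Uxy) as (x1 & y1 & nxy).
  destruct (unb_ne AB Uzw) as (z1 & w1 & nzw).
  pose proof (unb_sym AB Uxy) as Byx. pose proof (unb_sym AB Uzw) as Bwz.
  assert (Uxy1 : x * y <> x) by (intro E; apply Uxy; left; exact E).
  assert (Uxy2 : x * y <> y) by (intro E; apply Uxy; right; exact E).
  assert (Uzw1 : z * w <> z) by (intro E; apply Uzw; left; exact E).
  assert (Uzw2 : z * w <> w) by (intro E; apply Uzw; right; exact E).
  clear Uxy Uzw.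
  pose proof (idem AB x) as Ixx. pose proof (idem AB y) as Iyy.
  pose proof (idem AB z) as Izz. pose proof (idem AB w) as Iww.
  destruct Exy as [Exy|Exy]; destruct Ezw as [Ezw|Ezw].
  -
    assert (Exz : x * z = z) by (rewrite <- Exy, massoc, Ixx; auto).
    assert (Ezy : z * y = z) by (rewrite <- Exy, <- massoc, Iyy; auto).
    assert (Ezx : z * x = x) by (rewrite <- Ezw, massoc, Izz; auto).
    assert (Exw : x * w = x) by (rewrite <- Ezw, <- massoc, Iww; auto).
    assert (Eyx : y * x = x).
    { destruct Byx as [E|E]; auto. exfalso. apply Uxy1.
      transitivity (x * (y * x)); [rewrite E; auto|]. rewrite massoc, Exy, Ezx; auto. }
    assert (Ewz : w * z = z).
    { destruct Bwz as [E|E]; auto. exfalso. apply Uzw1.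
      transitivity (z * (w * z)); [rewrite E; auto|]. rewrite massoc, Ezw, Exz; auto. }
    assert (Eyz : y * z = z) by (rewrite <- Exy, massoc, Eyx; auto).
    assert (Ewx : w * x = x) by (rewrite <- Ezw, massoc, Ewz; auto).
    clear Byx Bwz.
    destruct (AB y w) as [[E|E]|[E|E]].
    + exfalso. apply n1. transitivity ((x * y) * w). rewrite Exy; auto. rewrite <- massoc, E, Exy; auto.
    + tfin [x; y; w] [y; z; w] [one; x; y; z; w] x.
    + exfalso. apply n1. transitivity (z * (w * y)). rewrite E, Ezw; auto. rewrite massoc, Ezw, Exy; auto.
    + tfin [w; x; y] [z; w; y] [one; x; y; z; w] x.
  -
    exfalso.
    assert (A1 : z * y = y) by (rewrite <- Ezw, massoc, Izz; auto).
    assert (A2 : z * y = z) by (rewrite <- Exy, <- massoc, Iyy; auto).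
    congruence.
  -
    exfalso.
    assert (A1 : x * w = w) by (rewrite <- Exy, massoc, Ixx; auto).
    assert (A2 : x * w = x) by (rewrite <- Ezw, <- massoc, Iww; auto).
    congruence.
  -
    assert (Exw : x * w = w) by (rewrite <- Exy, massoc, Ixx; auto).
    assert (Ewy : w * y = w) by (rewrite <- Exy, <- massoc, Iyy; auto).
    assert (Ezy : z * y = y) by (rewrite <- Ezw, massoc, Izz; auto).
    assert (Eyw : y * w = y) by (rewrite <- Ezw, <- massoc, Iww; auto).
    assert (Eyx : y * x = y).
    { destruct Byx as [E|E]; auto. exfalso. apply n4.
      transitivity (y * w); [auto|]. rewrite <- Exy, massoc, E; auto. }
    assert (Ewz : w * z = w).
    { destruct Bwz as [E|E]; auto. exfalso. apply n4.
      transitivity (w * y); [|auto]. rewrite <- Ezw, massoc, E; auto. }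
    assert (Eyz : y * z = y) by (rewrite <- Ezw, <- massoc, Ewz; auto).
    assert (Ewx : w * x = w) by (rewrite <- Exy, <- massoc, Eyx; auto).
    clear Byx Bwz.
    destruct (AB x z) as [[E|E]|[E|E]].
    + tfin [x; z; y] [x; z; w] [one; x; y; z; w] y.
    + exfalso. apply n4. transitivity ((x * z) * w). rewrite E, Ezw; auto. rewrite <- massoc, Ezw, Exy; auto.
    + tfin [z; x; y] [z; x; w] [one; x; y; z; w] y.
    + exfalso. apply n4. transitivity (z * (x * y)). rewrite Exy, Ezw; auto. rewrite massoc, E, Exy; auto.
Qed.

End SD.


Section SE.
Variable H : Monoid.
Local Notation "x * y" := (mmul H x y).
Local Notation one := (mone H).
Local Notation P := (Pfin1 H).
Local Notation pm := (@Pfin1_mul H).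
Local Notation pone := (Pfin1_one H).

Definition closedL (L : list H) := forall x y, In x L -> In y L -> In (x * y) L.

Lemma closedL_sub L us : In one L -> closedL L -> incl us L -> forall e, In e (subprods H us) -> In e L.
Proof.
  intros H1 HC Hi. apply subprods_closed; auto.
  apply Forall_forall; auto.
Qed.

Lemma bridge_finish a b c :
  a <> one -> b <> one -> c <> one -> a <> b -> b <> c -> a <> c ->
  a * b <> one -> a * b <> a -> a * b <> b -> a * b <> c ->
  b * c <> one -> b * c <> a ->
  a * c <> one -> a * c <> a -> a * c <> b -> a * c <> c -> a * c <> a * b -> a * c <> b * c ->
  let T := [one; a; b; c; a * b; b * c] in
  (forall e, In e (subprods H [b; c; a; b]) -> In e T) ->
  (forall e, In e T -> In e (subprods H [b; c; a; b])) ->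
  (forall e, In e (subprods H [b; c; a; a * b]) -> In e T) ->
  (forall e, In e T -> In e (subprods H [b; c; a; a * b])) ->
  closedL [one; b; c; b * c] -> closedL [one; a; b; a * b] -> closedL [one; a; c; a * c] ->
  In (a * c) (subprods H [a; b; c]) -> In (a * c) (subprods H [a; c; b]) ->
  In (a * c) (subprods H [b; a; c]) -> ~ In (b * c) (subprods H [c; a; b]) ->
  ~ In (a * b) (subprods H [c; b; a]) -> ~ In (a * b) (subprods H [b; c; a]) ->
  ~ UmF pm pone.
Proof.
  intros a1 b1 c1 ab bc ac p1 p1a p1b p1c q1 q1a r1 r1a r1b r1c r1p r1q T
    I1 I2 I3 I4 K1 K2 K3 O1 O2 O3 O4 O5 O6.
  assert (rT : ~ In (a * c) T) by (simpl; intuition congruence).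
  apply (@conclude H (map (@sing1 H) [b; c; a; b]) (map (@sing1 H) [b; c; a; a * b])
           (word_prod pm pone (map (@sing1 H) [b; c; a; b]))).
  - split; [apply fact_sing; auto; repeat constructor; auto|].
    intros (d & [_ Hd] & Hs & Hn). apply subword_sw in Hs.
    assert (length d < 4).
    { pose proof (sw_length Hs). simpl in H0.
      destruct (Nat.eq_dec (length d) 4); try lia. exfalso. apply Hn, sw_subword.
      apply sw_eq_length in Hs; [|simpl; lia].
      exists d; split; auto using sublist_refl. apply Permutation_sym; auto. }
    destruct (incl_map_sing _ (sw_incl Hs)) as (vs & -> & Hv).
    rewrite length_map in H0.
    assert (Hvs : forall e, In e T -> In e (subprods H vs)).
    { intros e He. apply (proj1 (car_word H vs e)). rewrite Hd. apply car_word. auto. }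
    destruct (classic (In a vs)) as [Ha|Ha].
    2:{ assert (In a [one; b; c; b * c]) as Hin.
        { apply (@closedL_sub _ vs); simpl; auto.
          intros v Hv'. pose proof (Hv v Hv') as Hv2. simpl in Hv2 |- *.
          destruct Hv2 as [<-|[<-|[<-|[<-|[]]]]]; tauto.
          apply Hvs; simpl; tauto. }
        simpl in Hin; intuition congruence. }
    destruct (classic (In c vs)) as [Hc|Hc].
    2:{ assert (In c [one; a; b; a * b]) as Hin.
        { apply (@closedL_sub _ vs); simpl; auto.
          intros v Hv'. pose proof (Hv v Hv') as Hv2. simpl in Hv2 |- *.
          destruct Hv2 as [<-|[<-|[<-|[<-|[]]]]]; tauto.
          apply Hvs; simpl; tauto. }
        simpl in Hin; intuition congruence. }
    destruct (classic (In b vs)) as [Hb|Hb].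
    2:{ assert (In b [one; a; c; a * c]) as Hin.
        { apply (@closedL_sub _ vs); simpl; auto.
          intros v Hv'. pose proof (Hv v Hv') as Hv2. simpl in Hv2 |- *.
          destruct Hv2 as [<-|[<-|[<-|[<-|[]]]]]; tauto.
          apply Hvs; simpl; tauto. }
        simpl in Hin; intuition congruence. }
    assert (Permutation [a; b; c] vs) as Hp.
    { apply NoDup_Permutation_bis.
      - repeat constructor; simpl; intuition congruence.
      - simpl; lia.
      - intros z [<-|[<-|[<-|[]]]]; auto. }
    assert (HvsT : forall e, In e (subprods H vs) -> In e T).
    { intros e He. apply I1. apply (proj1 (car_word H [b; c; a; b] e)). rewrite <- Hd. apply car_word. auto. }
    apply perm3 in Hp.
    destruct Hp as [ -> | [ -> | [ -> | [ -> | [ -> | -> ] ] ] ] ].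
    + apply rT, HvsT, O1.
    + apply rT, HvsT, O2.
    + apply rT, HvsT, O3.
    + apply O6, Hvs; simpl; tauto.
    + apply O4, Hvs; simpl; tauto.
    + apply O5, Hvs; simpl; tauto.
  - apply fact_sing; [repeat constructor; auto|].
    apply (@word_eq H [b; c; a; b] [b; c; a; a * b] T); auto.
  - intros Hs. apply sw_eq_length in Hs; [|reflexivity].
    assert (In (sing1 H (a * b)) (map (@sing1 H) [b; c; a; b])) as Hi.
    { apply Permutation_in with (l := map (@sing1 H) [b; c; a; a * b]).
      apply Permutation_sym; auto. simpl; tauto. }
    apply in_map_iff in Hi as (v & E & Hv). symmetry in E. apply sing1_inj in E; auto. subst.
    simpl in Hv; intuition congruence.
Qed.

End SE.


Section SF.
Variable H : Monoid.
Local Notation "x * y" := (mmul H x y).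
Local Notation one := (mone H).
Local Notation P := (Pfin1 H).
Local Notation pm := (@Pfin1_mul H).
Local Notation pone := (Pfin1_one H).
Variable AB : almost_breakable H.

Ltac npq1 Eq0 f := let Fq := fresh "Fq" in
  pose proof (f_equal f Eq0) as Fq; cbv beta in Fq; clear Eq0; revert Fq; norm; intro Fq; congruence.
Ltac npq a b c :=
  let Eq0 := fresh "Eq0" in intro Eq0;
  first [ npq1 Eq0 (fun t => b * t) | npq1 Eq0 (fun t => t * b)
        | npq1 Eq0 (fun t => c * t) | npq1 Eq0 (fun t => t * a) ].

Ltac closL := intros u v Hu Hv; simpl in Hu, Hv;
  repeat destruct Hu as [<-|Hu]; try contradiction;
  repeat destruct Hv as [<-|Hv]; try contradiction; simpl; norm; inl.

Ltac negin := let Hin := fresh "Hin" in intro Hin; simpl in Hin; repeat destruct Hin as [Hin|Hin]; try contradiction;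
  revert Hin; norm; intro Hin; congruence.

Lemma bridged_case : bridged H -> ~ UmF pm pone.
Proof.
  intros (a & b & c & Uab & Ubc & Uac & N1 & N2).
  destruct (unb_ne AB Uab) as (a1 & b1 & ab).
  destruct (unb_ne AB Ubc) as (_ & c1 & bc).
  destruct (unb_ne AB Uac) as (_ & _ & ac).
  pose proof (unb_sym AB Uab) as Bba. pose proof (unb_sym AB Ubc) as Bcb.
  pose proof (unb_sym AB Uac) as Bca.
  assert (p1a : a * b <> a) by (intro E; apply Uab; left; exact E).
  assert (p1b : a * b <> b) by (intro E; apply Uab; right; exact E).
  assert (q1b : b * c <> b) by (intro E; apply Ubc; left; exact E).
  assert (q1c : b * c <> c) by (intro E; apply Ubc; right; exact E).
  assert (r1a : a * c <> a) by (intro E; apply Uac; left; exact E).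
  assert (r1c : a * c <> c) by (intro E; apply Uac; right; exact E).
  clear Uab Ubc Uac.
  pose proof (idem AB a) as Ia. pose proof (idem AB b) as Ib. pose proof (idem AB c) as Ic.
  assert (p1 : a * b <> one) by (apply no_one; auto).
  assert (q1 : b * c <> one) by (apply no_one; auto).
  assert (r1 : a * c <> one) by (apply no_one; auto).
  assert (p1c : a * b <> c).
  { intro E. apply r1c. rewrite <- E at 1. rewrite massoc, Ia; auto. }
  assert (q1a : b * c <> a).
  { intro E. apply r1a. rewrite <- E at 1. rewrite <- massoc, Ic; auto. }
  assert (r1b : a * c <> b).
  { intro E. apply p1b. rewrite <- E at 1. rewrite massoc, Ia; auto. }
  destruct Bba as [Eba|Eba]; destruct Bcb as [Ecb|Ecb]; destruct Bca as [Eca|Eca];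
  (assert (Npq : a * b <> b * c) by npq a b c);
  apply (@bridge_finish H a b c); auto;
  try solve [eqlist]; try solve [closL]; try solve [simpl; norm; inl]; try solve [negin].
Qed.

End SF.

Unset Implicit Arguments.

Theorem proposition4p5 (H : Monoid) :
  almost_breakable H -> (twisted H \/ bridged H) ->
  ~ UmF (@Pfin1_mul H) (Pfin1_one H).
Proof.
  intros AB [T|B].
  - apply twisted_case; auto.
  - apply bridged_case; auto.
Qed.
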